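(* (a) Let $n\geq 3$ and let $H_1\neq H_2$ be $1$-dimensional linear subspaces of $\mathbb{R}^n$. Then: $H_1^\perp+H_2^\perp=\mathbb{R}^n$ and $\{H_1^\perp,H_2^\perp\}$ cannot be partitioned into two nonempty mutually orthogonal subsets; if $E\subset S^{n-1}$ is nonempty, closed, and $S^{n-1}\cap(H_j^\perp+x)\subset E$ for $j=1,2$ and all $x\in E$, then $E=S^{n-1}$; every closed $F\subset\mathbb{R}^n$ invariant under all rotations fixing $H_1$ and all rotations fixing $H_2$ is a union of spheres centered at the origin; and every convex body rotationally symmetric with respect to both $H_1$ and $H_2$ is a ball centered at the origin. (b) Let $n\ge 4$. For every $k\in\mathbb{N}$ there exist pairwise different linear subspaces $H_1,\dots,H_k$ of $\mathbb{R}^n$ with $2\le\dim H_j\le n-2$ and a convex body $K$ in $\mathbb{R}^n$ that is rotationally symmetric with respect to each $H_j$ but is not a ball centered at the origin (so that none of the conclusions in (a), with $H_1,H_2$ replaced by $H_1,\dots,H_k$, hold for them).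
   Context: $H^\perp$ is the orthogonal complement; $S^{n-1}$ the unit sphere. A rotation fixing $H$ is an element of $SO(n)$ acting as the identity on $H$. A set $X$ is rotationally symmetric with respect to an $i$-dimensional subspace $H$ if for every $x\in H$, $X\cap(H^\perp+x)$ is a union of $(n-i-1)$-dimensional spheres centered at $x$. A convex body is a compact convex set with nonempty interior. *)

(* Defs.v *)
(* MathComp + MathComp-Analysis, R : realType,
   points of R^n are row vectors 'rV[R]_n, linear subspaces are represented
   by matrices (their row spaces, mxalgebra). *)
From HB Require Import structures.
From mathcomp Require Import all_boot all_order all_algebra.
From mathcomp Require Import all_classical all_reals all_analysis.
Set Implicit Arguments. Unset Strict Implicit. Unset Printing Implicit Defensive.
Import Order.TTheory GRing.Theory Num.Theory.
Local Open Scope ring_scope.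
Import numFieldNormedType.Exports.
Local Open Scope classical_set_scope.

Section Defs.
Variables (R : realType) (n : nat).
Implicit Types (x y z u v : 'rV[R]_n) (H U V Q : 'M[R]_n) (X : set 'rV[R]_n).

Definition dotv u v : R := (u *m v^T) 0 0.
Definition enorm x : R := Num.sqrt (dotv x x).

Definition perp H : 'M[R]_n := kermx H^T.

Definition sphere : set 'rV[R]_n := [set x | enorm x = 1].

Definition orth_sub U V : Prop :=
  forall u v, (u <= U)%MS -> (v <= V)%MS -> dotv u v = 0.

(* Q in SO(n) (acting on row vectors by x |-> x *m Q) *)
Definition rotation Q : Prop := Q *m Q^T = 1%:M /\ \det Q = 1.

Definition rotation_fixing H Q : Prop :=
  rotation Q /\ forall x, (x <= H)%MS -> x *m Q = x.

Definition union_of_origin_spheres X : Prop :=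
  forall y z, enorm y = enorm z -> X y -> X z.

(* X is rotationally symmetric w.r.t. H: for every x in H,
   X /\ (H^perp + x) is a union of spheres (in x + H^perp) centered at x *)
Definition rot_symmetric X H : Prop :=
  forall x, (x <= H)%MS -> forall y z,
    (y - x <= perp H)%MS -> (z - x <= perp H)%MS ->
    enorm (y - x) = enorm (z - x) -> X y -> X z.

Definition convex_set X : Prop :=
  forall x y (t : R), X x -> X y -> 0 <= t <= 1 -> X (t *: x + (1 - t) *: y).

Definition convex_body X : Prop :=
  compact X /\ convex_set X /\ (X°) !=set0.

Definition origin_ball X : Prop :=
  exists r : R, 0 < r /\ X = [set x | enorm x <= r].

End Defs.

(* Main.v *)
Require Import Defs.
From HB Require Import structures.
From mathcomp Require Import all_boot all_order all_algebra.
From mathcomp Require Import all_classical all_reals all_analysis.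
From mathcomp Require Import ring lra zify.
Import Order.TTheory GRing.Theory Num.Theory.
Local Open Scope ring_scope.
Import numFieldNormedType.Exports.
Local Open Scope classical_set_scope.
Section Dot.
Context {R : realType} {n : nat}.
Implicit Types (u v w x y z : 'rV[R]_n).

Lemma dotvE u v : dotv u v = \sum_i u 0 i * v 0 i.
Proof. by rewrite /dotv mxE; apply: eq_bigr => i _; rewrite mxE. Qed.

Lemma dotvC u v : dotv u v = dotv v u.
Proof. by rewrite !dotvE; apply: eq_bigr => i _; rewrite mulrC. Qed.

Lemma dotvDl u v w : dotv (u + v) w = dotv u w + dotv v w.
Proof. by rewrite !dotvE -big_split; apply: eq_bigr => i _; rewrite mxE mulrDl. Qed.

Lemma dotvDr u v w : dotv w (u + v) = dotv w u + dotv w v.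
Proof. by rewrite dotvC dotvDl !(dotvC w). Qed.

Lemma dotvZl k u v : dotv (k *: u) v = k * dotv u v.
Proof. by rewrite !dotvE mulr_sumr; apply: eq_bigr => i _; rewrite mxE mulrA. Qed.

Lemma dotvZr k u v : dotv v (k *: u) = k * dotv v u.
Proof. by rewrite dotvC dotvZl dotvC. Qed.

Lemma dotvNl u v : dotv (- u) v = - dotv u v.
Proof. by rewrite -scaleN1r dotvZl mulN1r. Qed.

Lemma dotvNr u v : dotv v (- u) = - dotv v u.
Proof. by rewrite -scaleN1r dotvZr mulN1r. Qed.

Lemma dotvBl u v w : dotv (u - v) w = dotv u w - dotv v w.
Proof. by rewrite dotvDl dotvNl. Qed.

Lemma dotvBr u v w : dotv w (u - v) = dotv w u - dotv w v.
Proof. by rewrite dotvDr dotvNr. Qed.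

Lemma dotv0l u : dotv 0 u = 0.
Proof. by rewrite -(scale0r 0) dotvZl mul0r. Qed.

Lemma dotv0r u : dotv u 0 = 0.
Proof. by rewrite dotvC dotv0l. Qed.

Lemma dotv_ge0 u : 0 <= dotv u u.
Proof. by rewrite dotvE; apply: sumr_ge0 => i _; rewrite -expr2 sqr_ge0. Qed.

Lemma dotv_eq0 u : dotv u u = 0 -> u = 0.
Proof.
rewrite dotvE => /psumr_eq0P H; apply/rowP => i; rewrite mxE.
have := H (fun j _ => (le_trans (sqr_ge0 (u 0 j)) (le_refl _))) i isT; rewrite -expr2 => /eqP.
by rewrite sqrf_eq0 => /eqP.
Qed.

Lemma dotv_gt0 u : u != 0 -> 0 < dotv u u.
Proof.
move=> u0; rewrite lt_def dotv_ge0 andbT; apply/eqP => /dotv_eq0 /eqP.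
by rewrite (negPf u0).
Qed.

Lemma mulmx_trE u v : u *m v^T = (dotv u v)%:M.
Proof. by rewrite {1}[u *m v^T]mx11_scalar. Qed.

Lemma enorm_eq u v : (enorm u = enorm v) <-> (dotv u u = dotv v v).
Proof.
rewrite /enorm; split; last by move=> ->.
move=> /eqP; rewrite eqr_sqrt ?dotv_ge0 //; by move/eqP.
Qed.

Lemma enorm_le u r : 0 <= r -> (enorm u <= r) = (dotv u u <= r ^+ 2).
Proof.
move=> r0; rewrite /enorm -[in LHS](ger0_norm r0) -sqrtr_sqr ler_sqrt // ?sqr_ge0 //.
Qed.

Lemma enorm_sqr u : enorm u ^+ 2 = dotv u u.
Proof. by rewrite /enorm sqr_sqrtr // dotv_ge0. Qed.

Lemma enorm_ge0 u : 0 <= enorm u.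
Proof. exact: sqrtr_ge0. Qed.

Lemma cs_unit a x : dotv a a = 1 -> dotv x a ^+ 2 <= dotv x x.
Proof.
move=> a1; have := dotv_ge0 (x - dotv x a *: a).
rewrite !(dotvBl, dotvBr, dotvZl, dotvZr) a1 (dotvC a x).
set s := dotv x a; move=> h; lra.
Qed.

End Dot.

Section Lines.
Context {R : realType} {n : nat}.
Implicit Types (u v w x y z a b : 'rV[R]_n) (H : 'M[R]_n).

Lemma perpP H u : (u <= perp H)%MS = (u *m H^T == 0).
Proof. by rewrite /perp sub_kermx. Qed.

Lemma perp_dot {H u v} : (u <= perp H)%MS -> (v <= H)%MS -> dotv v u = 0.
Proof.
rewrite perpP => /eqP uH /submxP [w ->].
have : (u *m H^T)^T = 0 by rewrite uH trmx0.
rewrite trmx_mul trmxK => Hu.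
by rewrite /dotv -mulmxA Hu mulmx0 mxE.
Qed.

Lemma line_perp a H u : (H <= a)%MS -> dotv u a = 0 -> (u <= perp H)%MS.
Proof.
move=> /submxP [W ->] ua; rewrite perpP trmx_mul mulmxA mulmx_trE ua.
by rewrite raddf0 mul0mx.
Qed.

Lemma sub_line v a : (v <= a)%MS -> exists k, v = k *: a.
Proof.
move=> /submxP [w ->]; exists (w 0 0).
by rewrite {1}[w]mx11_scalar mul_scalar_mx.
Qed.

Lemma line_of_rank1 H : \rank H = 1%N ->
  exists a, [/\ dotv a a = 1, (H <= a)%MS & (a <= H)%MS].
Proof.
move=> rH.
have : exists i, row i H != 0.
  apply/existsP; apply: contraT; rewrite negb_exists => /forallP allz.
  have H0 : H = 0.
    apply/row_matrixP => i; rewrite row0; by have := allz i; rewrite negbK => /eqP.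
  by move: rH; rewrite H0 mxrank0.
case=> i ri0.
set r := row i H in ri0 *.
have d0 := dotv_gt0 _ ri0.
set e := enorm r.
have e0 : 0 < e by rewrite /e /enorm sqrtr_gt0.
exists (e^-1 *: r); split.
- rewrite dotvZl dotvZr -/(enorm r) -enorm_sqr -/e.
  by field; rewrite gt_eqF.
- have rH' : (r <= H)%MS by apply: row_sub.
  have := mxrank_leqif_sup rH'; rewrite rank_rV ri0 rH => /leqifP.
  case: ifP => // Hr _.
  have ei : e^-1 != 0 by rewrite invr_eq0 gt_eqF.
  by apply: (submx_trans Hr); rewrite (eqmx_scale _ ei).
- by rewrite scalemx_sub // row_sub.
Qed.

Lemma ortho_exists a b : (3 <= n)%N ->
  exists q, q != 0 /\ dotv q a = 0 /\ dotv q b = 0.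
Proof.
move=> n3.
set M : 'M[R]_(n, 1 + 1) := row_mx a^T b^T.
have rk : (1 <= \rank (kermx M))%N.
  rewrite mxrank_ker; have := rank_leq_col M; lia.
have : kermx M != 0 by rewrite -mxrank_eq0 -lt0n.
move=> K0.
have : exists i, row i (kermx M) != 0.
  apply/existsP; apply: contraT; rewrite negb_exists => /forallP allz.
  move: K0; apply: contraR => _; apply/eqP.
  apply/row_matrixP => i; rewrite row0; by have := allz i; rewrite negbK => /eqP.
case=> i qi; exists (row i (kermx M)); split => //.
have := row_sub i (kermx M); rewrite sub_kermx /M mul_mx_row => /eqP /eqP.
rewrite row_mx_eq0 => /andP [/eqP h1 /eqP h2].
by rewrite /dotv h1 h2 !mxE.
Qed.

Lemma unit_ortho a b : (3 <= n)%N ->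
  exists q, [/\ dotv q q = 1, dotv q a = 0 & dotv q b = 0].
Proof.
move=> n3; have [q [q0 [qa qb]]] := ortho_exists a b n3.
have d0 := dotv_gt0 _ q0.
have e0 : 0 < enorm q by rewrite /enorm sqrtr_gt0.
exists ((enorm q)^-1 *: q); split.
- rewrite dotvZl dotvZr -enorm_sqr; by field; rewrite gt_eqF.
- by rewrite dotvZl qa mulr0.
- by rewrite dotvZl qb mulr0.
Qed.

Lemma vec_dots a b rho s t : (3 <= n)%N ->
  dotv a a = 1 -> dotv b b = 1 -> (dotv a b) ^+ 2 < 1 ->
  s ^+ 2 - 2 * dotv a b * s * t + t ^+ 2 <= rho * (1 - dotv a b ^+ 2) ->
  exists z, [/\ dotv z z = rho, dotv z a = s & dotv z b = t].
Proof.
move=> n3 a1 b1 c1 feas.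
set c := dotv a b in c1 feas.
have d0 : 0 < 1 - c ^+ 2 by rewrite subr_gt0.
have [q [q1 qa qb]] := unit_ortho a b n3.
set l := (s - c * t) / (1 - c ^+ 2).
set m := (t - c * s) / (1 - c ^+ 2).
set p := l *: a + m *: b.
have pa : dotv p a = s.
  rewrite /p !(dotvDl, dotvZl) a1 (dotvC b a) -/c /l /m.
  by field; rewrite gt_eqF.
have pb : dotv p b = t.
  rewrite /p !(dotvDl, dotvZl) b1 -/c /l /m.
  by field; rewrite gt_eqF.
have pq : dotv p q = 0.
  by rewrite /p !(dotvDl, dotvZl) !(dotvC _ q) qa qb !mulr0 addr0.
have pp : dotv p p = (s ^+ 2 - 2 * c * s * t + t ^+ 2) / (1 - c ^+ 2).
  rewrite {1}/p dotvDl !dotvZl !(dotvC _ p) pa pb /l /m.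
  by field; rewrite gt_eqF.
have ple : dotv p p <= rho.
  by rewrite pp ler_pdivrMr.
set k := Num.sqrt (rho - dotv p p).
have k2 : k ^+ 2 = rho - dotv p p by rewrite sqr_sqrtr // subr_ge0.
exists (p + k *: q); split.
- clearbody p; rewrite !(dotvDl, dotvDr, dotvZl, dotvZr) (dotvC q p) pq q1.
  move: k2; rewrite expr2; set P := dotv p p => k2; nra.
- by rewrite dotvDl dotvZl qa mulr0 addr0.
- by rewrite dotvDl dotvZl qb mulr0 addr0.
Qed.

End Lines.

Section Core.
Context {R : realType} {n : nat}.
Implicit Types (u v w x y z a b : 'rV[R]_n) (X : set 'rV[R]_n).

Definition slice_closed X a :=
  forall x y, X x -> dotv y y = dotv x x -> dotv y a = dotv x a -> X y.

Definition Preach X a (r s : R) :=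
  exists x, [/\ X x, dotv x x = r ^+ 2 & dotv x a = s].

Lemma step_reach X a b r s0 s' : (3 <= n)%N ->
  dotv a a = 1 -> dotv b b = 1 -> dotv a b ^+ 2 < 1 -> 0 <= r ->
  slice_closed X a -> slice_closed X b ->
  Preach X a r s0 ->
  s0 - (1 - dotv a b ^+ 2) * (r + s0) <= s' <= s0 + (1 - dotv a b ^+ 2) * (r - s0) ->
  Preach X a r s'.
Proof.
move=> n3 a1 b1 c1 r0 Pa Pb [x [Xx xx xa]].
set c := dotv a b in c1 *; set d := 1 - c ^+ 2 => /andP [lo hi].
have d0 : 0 < d by rewrite subr_gt0.
have cs := cs_unit _ x a1; rewrite xx xa in cs.
have [y [yy ya yb]] : exists y, [/\ dotv y y = r ^+ 2, dotv y a = s0 & dotv y b = c * s0].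
  apply: vec_dots => //; rewrite -/c.
  have : 0 <= (1 - c ^+ 2) * (r ^+ 2 - s0 ^+ 2) by apply: mulr_ge0; lra.
  move=> h; nra.
have Xy : X y by apply: (Pa x y Xx); rewrite ?yy ?xx ?ya ?xa.
have [z [zz za zb]] : exists z, [/\ dotv z z = r ^+ 2, dotv z a = s' & dotv z b = c * s0].
  apply: vec_dots => //; rewrite -/c.
  have e1 : 0 <= d * r - (s' - c ^+ 2 * s0) by move: lo hi; rewrite /d; nra.
  have e2 : 0 <= d * r + (s' - c ^+ 2 * s0) by move: lo hi; rewrite /d; nra.
  have e3 := mulr_ge0 e1 e2.
  have e4 : 0 <= d * c ^+ 2 * (r ^+ 2 - s0 ^+ 2).
    by apply: mulr_ge0; [apply: mulr_ge0; [lra | apply: sqr_ge0] | lra].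
  move: e3 e4; rewrite /d; nra.
exists z; split => //; apply: (Pb y z Xy); [by rewrite zz yy | by rewrite zb yb].
Qed.
Arguments step_reach {X a b r s0 s'}.

Lemma up_reach X a b r (N : nat) s1 st : (3 <= n)%N ->
  dotv a a = 1 -> dotv b b = 1 -> dotv a b ^+ 2 < 1 -> 0 <= r ->
  slice_closed X a -> slice_closed X b ->
  Preach X a r s1 -> s1 <= st -> st < r ->
  st - s1 <= N%:R * ((1 - dotv a b ^+ 2) * (r - st)) ->
  Preach X a r st.
Proof.
move=> n3 a1 b1 c1 r0 Pa Pb.
set c := dotv a b in c1 *.
have d0 : 0 < 1 - c ^+ 2 by rewrite subr_gt0.
elim: N s1 => [|N IH] s1 P1 le1 str.
  rewrite mul0r subr_le0 => h; have -> : st = s1 by apply/eqP; rewrite eq_le h le1.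
  exact: P1.
have bnd : - r <= s1.
  case: P1 => x [_ xx xa]; have := cs_unit _ x a1; rewrite xx xa => h; nra.
have g0 : 0 <= (1 - c ^+ 2) * (r - st) by apply: mulr_ge0; lra.
have gle : (1 - c ^+ 2) * (r - st) <= (1 - c ^+ 2) * (r - s1) by apply: ler_wpM2l; lra.
have lo0 : 0 <= (1 - c ^+ 2) * (r + s1) by apply: mulr_ge0; lra.
case: (lerP (st - s1) ((1 - c ^+ 2) * (r - st))) => h.
  move=> _; apply: (step_reach n3 a1 b1 c1 r0 Pa Pb P1); rewrite -/c.
  apply/andP; split; lra.
move=> hN.
apply: (IH (s1 + (1 - c ^+ 2) * (r - st))) => //.
- apply: (step_reach n3 a1 b1 c1 r0 Pa Pb P1); rewrite -/c.
  apply/andP; split; lra.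
- lra.
- move: hN; rewrite -natr1 mulrDl mul1r; lra.
Qed.
Arguments up_reach {X a b r} N {s1 st}.

Lemma slice_closedN X a : slice_closed X a -> slice_closed X (- a).
Proof.
move=> Pa x y Xx yy ya; apply: (Pa x) => //.
by move: ya; rewrite !dotvNr => /oppr_inj.
Qed.
Arguments slice_closedN {X a}.

Lemma core {X a b} : (3 <= n)%N ->
  dotv a a = 1 -> dotv b b = 1 -> dotv a b ^+ 2 < 1 ->
  slice_closed X a -> slice_closed X b ->
  forall y z, dotv y y = dotv z z -> X y -> X z.
Proof.
move=> n3 a1 b1 c1 Pa Pb y z yz Xy.
set c := dotv a b in c1 *.
have d0 : 0 < 1 - c ^+ 2 by rewrite subr_gt0.
set rho := dotv y y in yz.
have [rho0|rhop] : rho = 0 \/ 0 < rho.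
  by have := dotv_ge0 y; rewrite le_eqVlt => /orP [/eqP ->|->]; [left|right].
  have y0 : y = 0 by apply: dotv_eq0.
  have z0 : z = 0 by apply: dotv_eq0; rewrite -yz.
  by rewrite z0 -y0.
set r := Num.sqrt rho.
have r0 : 0 < r by rewrite sqrtr_gt0.
have r2 : r ^+ 2 = rho by rewrite sqr_sqrtr // ltW.
set t := dotv z b.
have tb : t ^+ 2 <= r ^+ 2 by rewrite r2 yz; apply: cs_unit.
have ctr : (c * t) ^+ 2 < r ^+ 2.
  have [t0|t0] := eqVneq t 0; first by rewrite t0 mulr0 expr0n /= exprn_gt0.
  have : 0 < (1 - c ^+ 2) * t ^+ 2 by apply: mulr_gt0 => //; rewrite exprn_even_gt0.
  move=> h; rewrite exprMn; lra.
have ctlt : c * t < r by nra.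
have ctgt : - r < c * t by nra.
have P1 : Preach X a r (dotv y a) by exists y; split.
have cs1 := cs_unit _ y a1; rewrite -/rho -r2 in cs1.
have [x [Xx xx xa]] : Preach X a r (c * t).
  set st := c * t in ctlt ctgt *; set s1 := dotv y a in P1 cs1.
  have gp : 0 < (1 - c ^+ 2) * (r - st) by apply: mulr_gt0; lra.
  set g := (1 - c ^+ 2) * (r - st) in gp.
  case: (lerP s1 st) => hs.
  - apply: (up_reach (Num.truncn ((st - s1) / g)).+1 n3 a1 b1 c1 (ltW r0) Pa Pb P1) => //.
    rewrite -/c -/g -ler_pdivrMr //; apply: ltW; exact: truncnS_gt.
  - have gp' : 0 < (1 - c ^+ 2) * (r - (- st)) by apply: mulr_gt0; lra.
    have a1' : dotv (- a) (- a) = 1 by rewrite dotvNl dotvNr opprK.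
    have b1' : dotv (- b) (- b) = 1 by rewrite dotvNl dotvNr opprK.
    have cc : dotv (- a) (- b) = c by rewrite dotvNl dotvNr opprK.
    have c1' : dotv (- a) (- b) ^+ 2 < 1 by rewrite cc.
    have P1' : Preach X (- a) r (- s1) by exists y; rewrite dotvNr.
    have [x [Xx xx xa]] : Preach X (- a) r (- st).
      apply: (up_reach (Num.truncn ((- st - - s1) / ((1 - c ^+ 2) * (r - - st)))).+1
        n3 a1' b1' c1' (ltW r0) (slice_closedN Pa) (slice_closedN Pb) P1').
      + lra.
      + lra.
      + rewrite cc -ler_pdivrMr //; apply: ltW; exact: truncnS_gt.
    exists x; split => //.
    by move: xa; rewrite dotvNr => /oppr_inj.
have [w [ww wa wb]] : exists w, [/\ dotv w w = r ^+ 2, dotv w a = c * t & dotv w b = t].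
  apply: vec_dots => //; rewrite -/c.
  have : 0 <= (1 - c ^+ 2) * (r ^+ 2 - t ^+ 2) by apply: mulr_ge0; lra.
  move=> h; nra.
have Xw : X w by apply: (Pa x w Xx); rewrite ?ww ?xx ?wa ?xa.
by apply: (Pb w z Xw); rewrite ?ww ?r2.
Qed.

End Core.

Section Refl.
Context {R : realType}.

Lemma det_1addUV m (U : 'M[R]_(m, 1)) (V : 'M[R]_(1, m)) :
  \det (1%:M + U *m V) = 1 + (V *m U) 0 0.
Proof.
have e1 : (block_mx 1%:M (- V) U 1%:M : 'M[R]_(1 + m)) =
    block_mx 1%:M 0 U 1%:M *m block_mx 1%:M (- V) 0 (1%:M + U *m V).
  rewrite mulmx_block !(mul1mx, mulmx1, mul0mx, mulmx0, addr0, add0r).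
  by rewrite mulmxN addrCA addNr addr0.
have e2 : (block_mx 1%:M (- V) U 1%:M : 'M[R]_(1 + m)) =
    block_mx (1%:M + V *m U) (- V) 0 1%:M *m block_mx 1%:M 0 U 1%:M.
  rewrite mulmx_block !(mul1mx, mulmx1, mul0mx, mulmx0, addr0, add0r).
  by rewrite mulNmx addrK.
have := congr1 determinant e2; rewrite {1}e1 !det_mulmx !det_lblock !det_ublock.
rewrite !det1 !mul1r !mulr1 => ->.
by rewrite det_mx11 !mxE.
Qed.

Context {n : nat}.
Implicit Types (u v w x y a : 'rV[R]_n).

Definition refl u : 'M[R]_n := 1%:M - (2 / dotv u u) *: (u^T *m u).

Lemma reflE x u : x *m refl u = x - (2 / dotv u u * dotv x u) *: u.
Proof.
by rewrite /refl mulmxBr mulmx1 -scalemxAr mulmxA mulmx_trE mul_scalar_mx scalerA.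
Qed.

Lemma mx_rowext (A B : 'M[R]_n) : (forall x : 'rV[R]_n, x *m A = x *m B) -> A = B.
Proof.
move=> h; apply/row_matrixP => i.
by rewrite -(mul1mx A) -(mul1mx B) !row_mul h.
Qed.

Lemma refl_tr u : (refl u)^T = refl u.
Proof. by rewrite /refl linearB /= trmx1 linearZ /= trmx_mul trmxK. Qed.

Lemma reflK u : u != 0 -> refl u *m refl u = 1%:M.
Proof.
move=> u0; have d0 := dotv_gt0 _ u0.
apply: mx_rowext => x; rewrite mulmxA !reflE mulmx1.
rewrite !(dotvBl, dotvZl) -addrA -opprD -scalerDl.
set k := (X in X *: u).
have -> : k = 0 by rewrite /k; field; rewrite gt_eqF.
by rewrite scale0r oppr0 addr0.
Qed.

Lemma refl_det u : u != 0 -> \det (refl u) = -1.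
Proof.
move=> u0; have d0 := dotv_gt0 _ u0.
rewrite /refl -scaleNr scalemxAl det_1addUV.
rewrite -scalemxAr mxE mulmx_trE mxE /= mulr1n.
by field; rewrite gt_eqF.
Qed.

Lemma refl_fix u x : dotv x u = 0 -> x *m refl u = x.
Proof. by move=> h; rewrite reflE h mulr0 scale0r subr0. Qed.

Lemma rot_exists a {x y} : (3 <= n)%N -> dotv x x = dotv y y -> dotv x a = dotv y a ->
  exists Q, [/\ rotation Q, a *m Q = a & x *m Q = y].
Proof.
move=> n3 xy xa.
have [<-|xny] := eqVneq x y.
  exists 1%:M; split; rewrite ?mulmx1 //.
  by split; rewrite ?trmx1 ?mulmx1 ?det1.
set u := x - y.
have u0 : u != 0 by rewrite subr_eq0.
have d0 := dotv_gt0 _ u0.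
have xR : x *m refl u = y.
  rewrite reflE.
  have -> : 2 / dotv u u * dotv x u = 1.
    rewrite /u !(dotvBl, dotvBr) -xy (dotvC y x).
    rewrite /u !(dotvBl, dotvBr) -xy (dotvC y x) in d0.
    by field; rewrite gt_eqF.
  by rewrite scale1r /u opprB addrC subrK.
have aR : a *m refl u = a.
  by apply: refl_fix; rewrite /u dotvBr (dotvC a x) (dotvC a y) xa subrr.
have [w [w0 [wa wy]]] := ortho_exists a y n3.
have yR : y *m refl w = y by apply: refl_fix; rewrite dotvC.
have aR2 : a *m refl w = a by apply: refl_fix; rewrite dotvC.
exists (refl u *m refl w); split.
- split.
  + rewrite trmx_mul !refl_tr mulmxA -(mulmxA (refl u)) reflK // mulmx1 reflK //.
  + by rewrite det_mulmx !refl_det // mulrNN mulr1.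
- by rewrite mulmxA aR aR2.
- by rewrite mulmxA xR yR.
Qed.

End Refl.

Section PartA.
Context {R : realType} {n : nat}.
Implicit Types (u v w x y z a b : 'rV[R]_n) (H : 'M[R]_n).

Lemma not_parallel {H1 H2 a b} :
  dotv a a = 1 -> dotv b b = 1 ->
  (H1 <= a)%MS -> (a <= H1)%MS -> (H2 <= b)%MS -> (b <= H2)%MS ->
  ~~ (H1 == H2)%MS -> dotv a b ^+ 2 < 1.
Proof.
move=> a1 b1 H1a aH1 H2b bH2 neq.
set c := dotv a b.
have cs : c ^+ 2 <= 1 by rewrite -b1 /c dotvC; apply: cs_unit.
rewrite lt_neqAle cs andbT; apply: contra neq => /eqP c2.
have bca : b = c *: a.
  apply/subr0_eq/dotv_eq0.
  rewrite !(dotvBl, dotvBr, dotvZl, dotvZr) a1 b1 (dotvC b a) -/c.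
  by rewrite mulr1 -expr2 c2; ring.
have acb : a = c *: b.
  by rewrite bca scalerA -expr2 c2 scale1r.
apply/andP; split.
- apply: (submx_trans H1a); rewrite acb; apply: (submx_trans _ bH2); exact: scalemx_sub.
- apply: (submx_trans H2b); rewrite bca; apply: (submx_trans _ aH1); exact: scalemx_sub.
Qed.

Lemma perp_line_iff {H a} : (H <= a)%MS -> (a <= H)%MS ->
  forall u, (u <= perp H)%MS <-> dotv u a = 0.
Proof.
move=> Ha aH u; split; last exact: line_perp.
by move=> uH; rewrite dotvC; apply: (perp_dot uH aH).
Qed.

End PartA.

Lemma ball_of_spheres {R : realType} {n : nat} (K : set 'rV[R]_n) (a : 'rV[R]_n) :
  dotv a a = 1 -> convex_body K ->
  (forall y z, dotv y y = dotv z z -> K y -> K z) -> origin_ball K.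
Proof.
move=> a1 [cK [cvK [x0 Ix0]]] U.
have Kx0 : K x0 := interior_subset Ix0.
have a0 : a != 0 by apply/eqP => a0; move: a1; rewrite a0 dotv0l => /eqP; rewrite eq_sym oner_eq0.
have K0 : K 0.
  have Km : K (- x0) by apply: (U x0) => //; rewrite dotvNl dotvNr opprK.
  have h12 : (0 : R) <= (1 / 2 : R) <= (1 : R) by apply/andP; split; lra.
  have := cvK _ _ (1/2) Kx0 Km h12.
  have -> : (1 / 2 : R) *: x0 + (1 - 1 / 2) *: - x0 = 0.
    rewrite scalerN -scaleNr -scalerDl.
    have -> : (1 / 2 + - (1 - 1 / 2) : R) = 0 by field.
    by rewrite scale0r.
  by [].
have clK : closed K by apply: compact_closed => //; exact: norm_hausdorff.
set T := (fun t : R => t *: a) @^-1` K.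
have clT : closed T by apply: preimage_closed => //; move=> t _; exact: scalel_continuous.
have T0 : T 0 by rewrite /T /= scale0r.
have [M [_ MK]] := compact_bounded cK.
have na : 0 < `|a| by rewrite normr_gt0.
have ubT : ubound T ((M + 1) / `|a|).
  move=> t Tt; rewrite ler_pdivlMr //.
  apply: (le_trans (ler_norm _)); rewrite normrM normr_id -normrZ.
  by apply: (MK (M + 1)) => //; rewrite ltrDl.
have hsT : has_sup T by split; [exists 0 | exists ((M + 1) / `|a|)].
set r := sup T.
have Tr : T r.
  apply: (itv_closed_supremums (ex_intro _ 0 T0) clT); split.
  - exact: sup_upper_bound.
  - move=> y ub; exact: ge_sup (ex_intro _ 0 T0) ub.
have leT : forall t, T t -> t <= r by move=> t Tt; exact: sup_upper_bound.
have Knorm : forall x, K x -> T (enorm x).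
  move=> x Kx; rewrite /T /=; apply: (U x) => //.
  by rewrite dotvZl dotvZr a1 mulr1 -expr2 enorm_sqr.
have r0 : 0 < r.
  rewrite ltNge; apply/negP => rle.
  have K0s : forall y, K y -> y = 0.
    move=> y Ky; apply: dotv_eq0; rewrite -enorm_sqr.
    have : enorm y <= 0 by apply: (le_trans (leT _ (Knorm _ Ky))).
    move=> h; have -> : enorm y = 0 by apply/eqP; rewrite eq_le h enorm_ge0.
    by rewrite expr0n.
  move: Ix0; rewrite /interior /= => /nbhs_ballP [e e0 be].
  set k := e / 2 / `|a|.
  have k0 : 0 < k by rewrite /k divr_gt0 // divr_gt0.
  have Ky : K (x0 + k *: a).
    apply: be; rewrite -ball_normE /= opprD addrA subrr add0r normrN normrZ.
    have e1 : 0 < e := e0.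
    rewrite gtr0_norm // /k divfK ?gt_eqF //; lra.
  have := K0s _ Ky; rewrite (K0s _ Kx0) add0r => /eqP; rewrite scaler_eq0 (negPf a0) orbF.
  by rewrite gt_eqF.
exists r; split => //.
apply/seteqP; split => x /=.
- by move=> Kx; apply: leT; apply: Knorm.
- move=> xr.
  set l := enorm x / r.
  have hl : 0 <= l <= 1.
    apply/andP; split; first by rewrite /l divr_ge0 ?enorm_ge0 // ltW.
    by rewrite /l ler_pdivrMr // mul1r.
  have := cvK _ _ l Tr K0 hl; rewrite scaler0 addr0 scalerA.
  have -> : l * r = enorm x by rewrite /l -mulrA mulVf ?gt_eqF // mulr1.
  move=> Kxa; apply: (U _ _ _ Kxa).
  by rewrite dotvZl dotvZr a1 mulr1 -expr2 enorm_sqr.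
Qed.

Lemma partA (R : realType) :
  (forall (n : nat) (H1 H2 : 'M[R]_n),
     (3 <= n)%N -> \rank H1 = 1%N -> \rank H2 = 1%N -> ~~ (H1 == H2)%MS ->
     [/\ (perp H1 + perp H2 == 1%:M)%MS,
         ~ orth_sub (perp H1) (perp H2),
         (forall E : set 'rV[R]_n,
            E !=set0 -> closed E -> E `<=` @sphere R n ->
            (forall x, E x ->
               @sphere R n `&` [set y | (y - x <= perp H1)%MS] `<=` E /\
               @sphere R n `&` [set y | (y - x <= perp H2)%MS] `<=` E) ->
            E = @sphere R n),
         (forall F : set 'rV[R]_n,
            closed F ->
            (forall Q, rotation_fixing H1 Q -> forall x, F x -> F (x *m Q)) ->
            (forall Q, rotation_fixing H2 Q -> forall x, F x -> F (x *m Q)) ->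
            union_of_origin_spheres F)
       & (forall K : set 'rV[R]_n,
            convex_body K -> rot_symmetric K H1 -> rot_symmetric K H2 ->
            origin_ball K)]).
Proof.
move=> n H1 H2 n3 r1 r2 neq.
have [a [a1 H1a aH1]] := line_of_rank1 _ r1.
have [b [b1 H2b bH2]] := line_of_rank1 _ r2.
have c1 := not_parallel a1 b1 H1a aH1 H2b bH2 neq.
have P1 := perp_line_iff H1a aH1.
have P2 := perp_line_iff H2b bH2.
set c := dotv a b in c1.
have d0 : 0 < 1 - c ^+ 2 by rewrite subr_gt0.
split.
-
  apply/andP; split; first exact: submx1.
  apply/row_subP => i; set x := row i 1%:M.
  set p := (dotv x a / (1 - c ^+ 2)) *: (a - c *: b).
  have -> : x = (x - p) + p by rewrite subrK.
  apply: addmx_sub_adds.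
  + apply/P1; rewrite /p !(dotvBl, dotvZl) a1 (dotvC b a) -/c.
    by field; rewrite gt_eqF.
  + apply/P2; rewrite /p !(dotvBl, dotvZl) b1 -/c.
    by rewrite mulr1 subrr mulr0.
-
  move=> orth.
  have [q [q0 [qa qb]]] := ortho_exists a b n3.
  have := orth q q (proj2 (P1 q) qa) (proj2 (P2 q) qb).
  by move/dotv_eq0 => /eqP; rewrite (negPf q0).
-
  move=> E [x0 Ex0] _ ES hE.
  have sl : forall (h : 'M[R]_n) (e : 'rV[R]_n),
      (forall u, (u <= perp h)%MS <-> dotv u e = 0) ->
      (forall x, E x -> @sphere R n `&` [set y | (y - x <= perp h)%MS] `<=` E) ->
      slice_closed E e.
    move=> h e Ph hh x y Ex yy ye; apply: (hh x Ex); split.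
    + rewrite /sphere /=; have := ES x Ex; rewrite /sphere /= => <-.
      by apply/enorm_eq.
    + by apply/Ph; rewrite dotvBl ye subrr.
  have SE : slice_closed E a by apply: (sl H1) => // x Ex; case: (hE x Ex).
  have SF : slice_closed E b by apply: (sl H2) => // x Ex; case: (hE x Ex).
  apply/seteqP; split => // z Sz.
  apply: (core n3 a1 b1 c1 SE SF x0) => //.
  apply/enorm_eq; have := ES x0 Ex0; rewrite /sphere /= => ->; by rewrite Sz.
-
  move=> F _ hF1 hF2.
  have sl : forall (h : 'M[R]_n) (e : 'rV[R]_n),
      dotv e e = 1 -> (h <= e)%MS ->
      (forall Q, rotation_fixing h Q -> forall x, F x -> F (x *m Q)) ->
      slice_closed F e.
    move=> h e e1 he hh x y Fx yy ye.
    have [Q [rQ eQ xQ]] := rot_exists e n3 (esym yy) (esym ye).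
    rewrite -xQ; apply: hh => //; split => // v vh.
    have [k ->] := sub_line _ _ (submx_trans vh he).
    by rewrite -scalemxAl eQ.
  have SE := sl _ _ a1 H1a hF1.
  have SF := sl _ _ b1 H2b hF2.
  move=> y z /enorm_eq yz Fy.
  exact: (core n3 a1 b1 c1 SE SF y z yz Fy).
-
  move=> K cK rs1 rs2.
  have sl : forall (h : 'M[R]_n) (e : 'rV[R]_n),
      dotv e e = 1 -> (e <= h)%MS ->
      (forall u, (u <= perp h)%MS <-> dotv u e = 0) ->
      rot_symmetric K h -> slice_closed K e.
    move=> h e e1 eh Ph rs x y Kx yy ye.
    set s := dotv x e.
    have x0h : (s *: e <= h)%MS by apply: (submx_trans (scalemx_sub _ _) eh).
    apply: (rs (s *: e) x0h x y) => //.
    + by apply/Ph; rewrite dotvBl dotvZl e1 mulr1 subrr.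
    + by apply/Ph; rewrite dotvBl dotvZl e1 mulr1 ye subrr.
    + apply/enorm_eq; rewrite !(dotvBl, dotvBr, dotvZl, dotvZr) yy ye.
      by rewrite (dotvC e x) (dotvC e y) ye.
  have SE := sl _ _ a1 aH1 P1 rs1.
  have SF := sl _ _ b1 bH2 P2 rs2.
  apply: (ball_of_spheres _ _ a1 cK).
  move=> y z yz Ky; exact: (core n3 a1 b1 c1 SE SF y z yz Ky).
Qed.

Section PartB.
Context {R : realType}.

Definition ev {n} (k : 'I_n) : 'rV[R]_n := delta_mx 0 k.

Lemma evE n (k l : 'I_n) : ev k 0 l = (l == k)%:R.
Proof. by rewrite /ev mxE eqxx. Qed.

Lemma dot_ev n (k l : 'I_n) : dotv (ev k) (ev l) = (k == l)%:R.
Proof.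
rewrite /dotv /ev trmx_delta mul_delta_mx_cond.
by case: (k == l); rewrite ?mulr0n ?mulr1n ?mxE //.
Qed.

Lemma entry_le_norm {n} (x : 'rV[R]_n) i : `|x 0 i| <= `|x|.
Proof.
rewrite [leRHS]/Num.norm /= mx_normrE; apply/bigmax_geP; right => /=.
by exists (0, i).
Qed.

Section Ball.
Context {n : nat}.
Variable (e : 'rV[R]_n.+1).
Hypothesis e1 : dotv e e = 1.
Hypothesis ecoord : forall i, 0 <= e 0 i <= 1.

Definition Kb : set 'rV[R]_n.+1 := [set x | dotv (x - e) (x - e) <= 1].

Lemma Kb_closed : closed Kb.
Proof.
have cg : continuous (fun x : 'rV[R]_n.+1 => dotv (x - e) (x - e)).
  have -> : (fun x : 'rV[R]_n.+1 => dotv (x - e) (x - e)) =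
      (fun x => \sum_(i < n.+1) ((x 0 i - e 0 i) * (x 0 i - e 0 i))).
    by apply: funext => x; rewrite dotvE; apply: eq_bigr => i _; rewrite !mxE.
  apply: continuous_big => [|i _]; first exact: add_continuous.
  move=> x.
  have cf : {for x, continuous (fun x : 'rV[R]_n.+1 => x 0 i - e 0 i)}.
    apply: (@continuousB R R^o _ (fun x : 'rV[R]_n.+1 => x 0 i) (fun=> e 0 i)).
      exact: coord_continuous.
    exact: cst_continuous.
  exact: (continuousM cf cf).
apply: (@preimage_closed _ _ (fun x : 'rV[R]_n.+1 => dotv (x - e) (x - e)) [set r : R | r <= 1]).
  by move=> x _; exact: cg.
exact: closed_le.
Qed.

Lemma Kb_coord x i : Kb x -> (x 0 i - e 0 i) ^+ 2 <= 1.
Proof.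
rewrite /Kb /= dotvE => h; apply: le_trans h.
rewrite (bigD1 i) //= !mxE -expr2 lerDl.
by apply: sumr_ge0 => j _; rewrite !mxE -expr2 sqr_ge0.
Qed.

Lemma Kb_compact : compact Kb.
Proof.
have cube := @rV_compact R n.+1 (fun _ : 'I_n.+1 => `[(-2 : R), 2]%classic) (fun _ => @segment_compact R (-2) 2).
apply: (subclosed_compact Kb_closed cube).
move=> x Kx i /=; rewrite in_itv /=.
have := Kb_coord x i Kx; have := ecoord i => /andP [h1 h2] h.
apply/andP; split; nra.
Qed.

Lemma Kb_convex : Defs.convex_set Kb.
Proof.
move=> x y t Kx Ky /andP [t0 t1]; rewrite /Kb /= in Kx Ky *.
have -> : t *: x + (1 - t) *: y - e = t *: (x - e) + (1 - t) *: (y - e).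
  by rewrite !scalerBr addrACA -opprD -scalerDl [t + _]addrC subrK scale1r.
move: Kx Ky; set u := x - e; set v := y - e => Ku Kv.
have := dotv_ge0 (u - v).
clearbody u v.
rewrite !(dotvDl, dotvDr, dotvBl, dotvBr, dotvZl, dotvZr, dotvNl, dotvNr) (dotvC v u) opprK.
move=> h.
have h2 : 0 <= t * (1 - t) by apply: mulr_ge0; lra.
have h3 := mulr_ge0 h2 h.
have h4 : 0 <= t * (1 - dotv u u) by apply: mulr_ge0; lra.
have h5 : 0 <= (1 - t) * (1 - dotv v v) by apply: mulr_ge0; lra.
nra.
Qed.

Lemma Kb_interior : (Kb°) e.
Proof.
rewrite /interior /=; apply/nbhs_ballP.
exists (1 / n.+1%:R) => /=; first by rewrite divr_gt0 // ltr0n.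
move=> x; rewrite -ball_normE /= => hx.
rewrite /Kb /= dotvE.
apply: (le_trans (y := \sum_(i < n.+1) (1 / n.+1%:R) ^+ 2)).
  apply: ler_sum => i _; rewrite !mxE -expr2.
  have := entry_le_norm (e - x) i; rewrite !mxE => hi.
  have hxi : `|e 0 i - x 0 i| < 1 / n.+1%:R by apply: le_lt_trans hx.
  rewrite -normrN opprB in hxi; rewrite -[leLHS]real_normK ?num_real //; apply: ltW.
  by rewrite ltr_pXn2r // ?nnegrE // divr_ge0 ?ler0n.
rewrite sumr_const card_ord -[_ *+ n.+1]mulr_natl.
have np : 0 < n.+1%:R :> R by rewrite ltr0n.
have -> : n.+1%:R * (1 / n.+1%:R) ^+ 2 = 1 / n.+1%:R :> R by field; rewrite gt_eqF.
by rewrite ler_pdivrMr // mul1r ler1n.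
Qed.

Lemma Kb_body : convex_body Kb.
Proof.
split; first exact: Kb_compact.
split; first exact: Kb_convex.
by exists e; exact: Kb_interior.
Qed.

Lemma Kb_not_ball : ~ origin_ball Kb.
Proof.
move=> [r [r0 KE]].
have K2 : Kb (2 *: e).
  rewrite /Kb /=; have -> : 2 *: e - e = e by rewrite scalerDl scale1r addrK.
  by rewrite e1.
have K3 : Kb (- (2 *: e)).
  rewrite KE /= in K2 *; move: K2; rewrite !enorm_le ?(ltW r0) //.
  by rewrite dotvNl dotvNr opprK.
move: K3; rewrite /Kb /=.
have -> : - (2 *: e) - e = (-3 : R) *: e by apply/rowP => i; rewrite !mxE; ring.
rewrite !(dotvZl, dotvZr) e1; lra.
Qed.

Lemma Kb_rot (H : 'M[R]_n.+1) : (e <= H)%MS -> rot_symmetric Kb H.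
Proof.
move=> eH x xH y z hy hz /enorm_eq hn Ky.
rewrite /Kb /= in Ky *.
have xe : (x - e <= H)%MS by rewrite addmx_sub // eqmx_opp.
have ey : y - e = (y - x) + (x - e) by rewrite addrA subrK.
have ez : z - e = (z - x) + (x - e) by rewrite addrA subrK.
have key : forall p q : 'rV[R]_n.+1, dotv q p = 0 -> dotv (p + q) (p + q) = dotv p p + dotv q q.
  move=> p q h; rewrite !(dotvDl, dotvDr) h (dotvC p q) h; ring.
rewrite ez; rewrite ey in Ky.
by rewrite key ?(perp_dot hz xe) // -hn -key ?(perp_dot hy xe).
Qed.

End Ball.
End PartB.

Lemma mx11_mul {R : realType} {n} (u : 'M[R]_1) (v : 'rV[R]_n) : u *m v = u 0 0 *: v.
Proof. by rewrite {1}[u]mx11_scalar mul_scalar_mx. Qed.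

Lemma partB (R : realType) :
  (forall (n : nat), (4 <= n)%N -> forall k : nat,
     exists Hs : 'I_k -> 'M[R]_n,
       (forall i j, i != j -> ~~ (Hs i == Hs j)%MS) /\
       (forall j, (2 <= \rank (Hs j) <= n - 2)%N) /\
       exists K : set 'rV[R]_n,
         convex_body K /\ (forall j, rot_symmetric K (Hs j)) /\ ~ origin_ball K).
Proof.
case=> [|[|[|[|m]]]] // _ k.
pose i0 : 'I_(m.+4) := ord0.
pose i1 : 'I_(m.+4) := inord 1.
pose i2 : 'I_(m.+4) := inord 2.
have v1 : (i1 : nat) = 1%N by rewrite /i1 inordK.
have v2 : (i2 : nat) = 2%N by rewrite /i2 inordK.
have n01 : (i1 == i0) = false by apply/eqP => /(congr1 (@nat_of_ord _)); rewrite v1.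
have n02 : (i2 == i0) = false by apply/eqP => /(congr1 (@nat_of_ord _)); rewrite v2.
have n12 : (i1 == i2) = false by apply/eqP => /(congr1 (@nat_of_ord _)); rewrite v1 v2.
have n21 : (i2 == i1) = false by rewrite eq_sym.
have n10 : (i0 == i1) = false by rewrite eq_sym.
set e : 'rV[R]_(m.+4) := ev i0.
pose w (j : nat) : 'rV[R]_(m.+4) := ev i1 + j%:R *: ev i2.
pose W (j : nat) : 'M[R]_(1 + 1, m.+4) := col_mx e (w j).
have we1 : forall j, w j 0 i1 = 1.
  by move=> j; rewrite /w !mxE /= !eqxx n12 /= mulr0 addr0.
have we2 : forall j, w j 0 i2 = j%:R.
  by move=> j; rewrite /w !mxE /= !eqxx n21 /= mulr1 add0r.
have ee1 : e 0 i1 = 0 by rewrite /e evE n01.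
have ee2 : e 0 i2 = 0 by rewrite /e evE n02.
have e0 : e != 0 by apply/eqP => /(congr1 (fun M : 'rV[R]_(m.+4) => M 0 i0)); rewrite /e evE eqxx mxE; apply/eqP; rewrite oner_eq0.
have w0 : forall j, w j != 0 by move=> j; apply/eqP => /(congr1 (fun M : 'rV[R]_(m.+4) => M 0 i1)); rewrite we1 mxE; apply/eqP; rewrite oner_eq0.
have e1 : dotv e e = 1 by rewrite /e dot_ev eqxx.
have ec : forall i, 0 <= e 0 i <= 1.
  by move=> i; rewrite /e evE; case: (i == i0); rewrite ?ler01 ?lexx.
clearbody e w.
have entryDZ : forall (a b : R) (x y : 'rV[R]_(m.+4)) l, (a *: x + b *: y) 0 l = a * x 0 l + b * y 0 l.
  by move=> *; rewrite !mxE.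
exists (fun j : 'I_k => <<W (val j)>>%MS); split; [|split].
- move=> i j ij; rewrite !genmxE; apply/negP => /andP [hij _].
  move: hij; rewrite col_mx_sub => /andP [_].
  rewrite -addsmxE => /sub_addsmxP [[u1 u2] /= hw].
  have := congr1 (fun M : 'rV[R]_(m.+4) => M 0 i1) hw; rewrite !mx11_mul entryDZ ee1 !we1 mulr0 add0r mulr1 => b1.
  have := congr1 (fun M : 'rV[R]_(m.+4) => M 0 i2) hw; rewrite !mx11_mul entryDZ ee2 !we2 mulr0 add0r -b1 mul1r.
  move/eqP; rewrite eqr_nat => /eqP /val_inj hij.
  by move: ij; rewrite hij eqxx.
- move=> j; rewrite mxrank_gen /W -addsmxE mxrank_disjoint_sum.
    by rewrite !rank_rV e0 w0.
  apply/row_matrixP => r; rewrite row0.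
  set v := row r _.
  have ve : (v <= e)%MS by apply: submx_trans (row_sub _ _) (capmxSl _ _).
  have vw : (v <= w (val j))%MS by apply: submx_trans (row_sub _ _) (capmxSr _ _).
  have [a ha] := sub_line _ _ ve.
  have [b hb] := sub_line _ _ vw.
  have hab : a *: e = b *: w (val j) by rewrite -ha -hb.
  have := congr1 (fun M : 'rV[R]_(m.+4) => M 0 i1) hab.
  rewrite [LHS]mxE [RHS]mxE ee1 we1 mulr0 mulr1 => b0.
  by rewrite hb -b0 scale0r.
- exists (Kb e); split; first exact: Kb_body.
  split; last exact: Kb_not_ball.
  move=> j; apply: Kb_rot.
  by rewrite genmxE /W -addsmxE addsmxSl.
Qed.

Theorem corollary4p3 (R : realType) :
  (* (a) *)
  (forall (n : nat) (H1 H2 : 'M[R]_n),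
     (3 <= n)%N -> \rank H1 = 1%N -> \rank H2 = 1%N -> ~~ (H1 == H2)%MS ->
     [/\ (perp H1 + perp H2 == 1%:M)%MS,
         ~ orth_sub (perp H1) (perp H2),
         (forall E : set 'rV[R]_n,
            E !=set0 -> closed E -> E `<=` @sphere R n ->
            (forall x, E x ->
               @sphere R n `&` [set y | (y - x <= perp H1)%MS] `<=` E /\
               @sphere R n `&` [set y | (y - x <= perp H2)%MS] `<=` E) ->
            E = @sphere R n),
         (forall F : set 'rV[R]_n,
            closed F ->
            (forall Q, rotation_fixing H1 Q -> forall x, F x -> F (x *m Q)) ->
            (forall Q, rotation_fixing H2 Q -> forall x, F x -> F (x *m Q)) ->
            union_of_origin_spheres F)
       & (forall K : set 'rV[R]_n,
            convex_body K -> rot_symmetric K H1 -> rot_symmetric K H2 ->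
            origin_ball K)]) /\
  (* (b) *)
  (forall (n : nat), (4 <= n)%N -> forall k : nat,
     exists Hs : 'I_k -> 'M[R]_n,
       (forall i j, i != j -> ~~ (Hs i == Hs j)%MS) /\
       (forall j, (2 <= \rank (Hs j) <= n - 2)%N) /\
       exists K : set 'rV[R]_n,
         convex_body K /\ (forall j, rot_symmetric K (Hs j)) /\ ~ origin_ball K).
Proof.
split; [exact: partA | exact: partB].
Qed.
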